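(* Consider the $N$-layer cascade of the context and let $2\le n\le N$. Let $U$ be an intermediate species and $\mathcal{M}$ a monomial in non-intermediate variables such that $u\mathcal{M}$ appears in $s_{n-1,L_{n-1}}^{(\ell_0)}$ for some $\ell_0\ge1$ and in no derivative $s_{n-1,L_{n-1}}^{(\ell)}$ with $1\le\ell<\ell_0$. Assume every variable of $\mathcal{M}$ corresponds to a species in $\mathscr{S}^{(k)}$ for some $1\le k\le n-1$ or in $\mathscr{S}^{(2N+1)}$, that $\mathcal{M}$ does not involve two variables corresponding to species that react together, and that $s_{n-1,L_{n-1}}$ does not divide $\mathcal{M}$. Let $C_{\mathcal{M}}$ and $\widetilde C_{\mathcal{M}}$ be the coefficients (possibly zero for the latter) of $u\mathcal{M}$ in $s_{n-1,L_{n-1}}^{(\ell_0)}$ and $s_{n-1,L_{n-1}}^{(\ell_0+1)}$. Then $\widehat{\mathcal{M}}:=s_{n,L_n-1}u\mathcal{M}$ appears in $s_{n,L_n}^{(\ell_0+2)}$ and in no $s_{n,L_n}^{(\ell)}$ with $1\le\ell<\ell_0+2$; its coefficient in $s_{n,L_n}^{(\ell_0+2)}$ is $c_{n,L_n}a_{n,L_n}C_{\mathcal{M}}$, and its coefficient in $s_{n,L_n}^{(\ell_0+3)}$ is $c_{n,L_n}a_{n,L_n}(\widetilde C_{\mathcal{M}}-K_{n,L_n}C_{\mathcal{M}})$, where $K_{n,L_n}=b_{n,L_n}+c_{n,L_n}$.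
   Context: Species are capital letters, concentrations lower-case letters. Mass-action system: $\dot{\mathbf{x}}=\sum_{y\to y'}k_{yy'}\mathbf{x}^y(y'-y)$. Total derivative: $\dot\varphi=\sum_i\frac{\partial\varphi}{\partial x_i}\dot x_i$ with $\dot x_i$ replaced by the right-hand side; $\varphi^{(\ell)}$ the $\ell$-th iterate, a polynomial in concentrations with coefficients polynomial in the rate constants; a monomial appears if its coefficient is nonzero. A non-intermediate $X_1$ reacts with a non-intermediate $X_2$ if there is a reaction $X_1+X_2\to W$ with $W$ intermediate. Cascade: $N\ge1$, $L_1,\dots,L_N\ge1$. Non-intermediate species $E$, pairwise distinct $F_1,\dots,F_N$, and $S_{m,j}$ ($1\le m\le N$, $0\le j\le L_m$), all distinct; intermediates $U_{m,j},V_{m,j}$ ($1\le j\le L_m$), all distinct. $S_{0,L_0}:=E$. For each $m$, $1\le j\le L_m$: $S_{m-1,L_{m-1}}+S_{m,j-1}\to U_{m,j}$ (rate $a_{m,j}$), $U_{m,j}\to S_{m-1,L_{m-1}}+S_{m,j-1}$ ($b_{m,j}$), $U_{m,j}\to S_{m-1,L_{m-1}}+S_{m,j}$ ($c_{m,j}$), $F_m+S_{m,j}\to V_{m,j}$ ($\tilde a_{m,j}$), $V_{m,j}\to F_m+S_{m,j}$ ($\tilde b_{m,j}$), $V_{m,j}\to F_m+S_{m,j-1}$ ($\tilde c_{m,j}$). Partition of non-intermediates: $\mathscr{S}^{(m)}=\{S_{m,0},\dots,S_{m,L_m}\}$, $\mathscr{S}^{(N+m)}=\{F_m\}$ ($1\le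 m\le N$), $\mathscr{S}^{(2N+1)}=\{E\}$. *)

(* Defs.v *)
(* Formal polynomials are represented syntactically as lists
   of terms (integer coefficient, multiset of concentration variables,
   multiset of rate-constant variables); coefficients are extracted
   semantically by summing over all terms with the same monomials. *)
From Stdlib Require List.
From HB Require Import structures.
From mathcomp Require Import all_boot all_order all_algebra.
Set Implicit Arguments. Unset Strict Implicit. Unset Printing Implicit Defensive.
Import GRing.Theory Num.Theory.
Local Open Scope ring_scope.

Inductive species :=
| Sp_E
| Sp_F of nat
| Sp_S of nat & nat
| Sp_U of nat & nat
| Sp_V of nat & nat.

Definition sp_code (x : species) : nat * nat * nat :=
  match x with
  | Sp_E => (0, 0, 0) | Sp_F m => (1, m, 0) | Sp_S m j => (2, m, j)
  | Sp_U m j => (3, m, j) | Sp_V m j => (4, m, j) end%N.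
Definition sp_decode (c : nat * nat * nat) : option species :=
  match c with
  | (0, 0, 0) => Some Sp_E | (1, m, 0) => Some (Sp_F m) | (2, m, j) => Some (Sp_S m j)
  | (3, m, j) => Some (Sp_U m j) | (4, m, j) => Some (Sp_V m j) | _ => None end%N.
Lemma sp_codeK : pcancel sp_code sp_decode. Proof. by case. Qed.
HB.instance Definition _ := Equality.copy species (pcan_type sp_codeK).

Inductive rate :=
| Ra of nat & nat | Rb of nat & nat | Rc of nat & nat
| Rat of nat & nat | Rbt of nat & nat | Rct of nat & nat.

Definition rt_code (x : rate) : nat * nat * nat :=
  match x with
  | Ra m j => (0, m, j) | Rb m j => (1, m, j) | Rc m j => (2, m, j)
  | Rat m j => (3, m, j) | Rbt m j => (4, m, j) | Rct m j => (5, m, j) end%N.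
Definition rt_decode (c : nat * nat * nat) : option rate :=
  match c with
  | (0, m, j) => Some (Ra m j) | (1, m, j) => Some (Rb m j) | (2, m, j) => Some (Rc m j)
  | (3, m, j) => Some (Rat m j) | (4, m, j) => Some (Rbt m j) | (5, m, j) => Some (Rct m j)
  | _ => None end%N.
Lemma rt_codeK : pcancel rt_code rt_decode. Proof. by case. Qed.
HB.instance Definition _ := Equality.copy rate (pcan_type rt_codeK).

Record reaction := Rxn { rrate : rate; rreact : seq species; rprod : seq species }.

Definition enz (L : nat -> nat) (m : nat) : species :=
  match m with 1%N => Sp_E | _ => Sp_S m.-1 (L m.-1) end.

Definition layer_rxns (L : nat -> nat) (m j : nat) : seq reaction :=
  [:: Rxn (Ra m j) [:: enz L m; Sp_S m j.-1] [:: Sp_U m j];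
      Rxn (Rb m j) [:: Sp_U m j] [:: enz L m; Sp_S m j.-1];
      Rxn (Rc m j) [:: Sp_U m j] [:: enz L m; Sp_S m j];
      Rxn (Rat m j) [:: Sp_F m; Sp_S m j] [:: Sp_V m j];
      Rxn (Rbt m j) [:: Sp_V m j] [:: Sp_F m; Sp_S m j];
      Rxn (Rct m j) [:: Sp_V m j] [:: Sp_F m; Sp_S m j.-1]].

Definition network (N : nat) (L : nat -> nat) : seq reaction :=
  flatten [seq flatten [seq layer_rxns L m j | j <- iota 1 (L m)] | m <- iota 1 N].

Definition intermediate (N : nat) (L : nat -> nat) (X : species) : Prop :=
  exists m j, [/\ (1 <= m <= N)%N, (1 <= j <= L m)%N & (X = Sp_U m j \/ X = Sp_V m j)].

Definition in_class (N : nat) (L : nat -> nat) (k : nat) (X : species) : Prop :=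
  ((1 <= k <= N)%N /\ (exists j, (j <= L k)%N /\ X = Sp_S k j))
  \/ ((N < k <= N.*2)%N /\ X = Sp_F (k - N))
  \/ (k = N.*2.+1 /\ X = Sp_E).

Definition reacts (N : nat) (L : nat -> nat) (X1 X2 : species) : Prop :=
  exists r, List.In r (network N L) /\
    perm_eq (rreact r) [:: X1; X2] /\ exists W, rprod r = [:: W] /\ intermediate N L W.

Record term := Term { tcoef : int; tx : seq species; tk : seq rate }.
Definition poly := seq term.

(* right-hand side of the ODE for x_X : sum_r k_r x^{y_r} (y'_r - y_r)_X *)
Definition rhs (net : seq reaction) (X : species) : poly :=
  [seq Term ((count_mem X (rprod r))%:Z - (count_mem X (rreact r))%:Z)
            (rreact r) [:: rrate r] | r <- net].

Definition rem_at (i : nat) (s : seq species) := take i s ++ drop i.+1 s.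

(* total derivative of a term, by the product rule on each factor *)
Definition dterm (net : seq reaction) (t : term) : poly :=
  flatten [seq [seq Term (tcoef t * tcoef s) (rem_at i (tx t) ++ tx s) (tk t ++ tk s)
               | s <- rhs net (nth Sp_E (tx t) i)] | i <- iota 0 (size (tx t))].

Definition dot (net : seq reaction) (P : poly) : poly := flatten (map (dterm net) P).

Definition iterd (N : nat) (L : nat -> nat) (l : nat) (X : species) : poly :=
  iter l (dot (network N L)) [:: Term 1 [:: X] [::]].

Definition kpoly := seq (int * seq rate).
Definition kcoef (Q : kpoly) (K : seq rate) : int :=
  \sum_(q <- Q | perm_eq q.2 K) q.1.
Definition keq (Q1 Q2 : kpoly) : Prop := forall K, kcoef Q1 K = kcoef Q2 K.
Definition kmul (Q1 Q2 : kpoly) : kpoly :=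
  [seq (q1.1 * q2.1, q1.2 ++ q2.2) | q1 <- Q1, q2 <- Q2].
Definition kadd (Q1 Q2 : kpoly) : kpoly := Q1 ++ Q2.
Definition kopp (Q : kpoly) : kpoly := [seq (- q.1, q.2) | q <- Q].
Definition kvar (k : rate) : kpoly := [:: (1, [:: k])].

Definition coefx (P : poly) (M : seq species) : kpoly :=
  [seq (tcoef t, tk t) | t <- P & perm_eq (tx t) M].

Definition appears (P : poly) (M : seq species) : Prop :=
  exists K, kcoef (coefx P M) K != 0.

(* Main.v *)
Require Import Defs.
From mathcomp Require Import all_boot all_order all_algebra.
Import GRing.Theory Num.Theory.
From mathcomp Require Import zify.
Set Implicit Arguments. Unset Strict Implicit. Unset Printing Implicit Defensive.
Local Open Scope ring_scope.


Lemma all_flatten (A : Type) (a : pred A) (ss : seq (seq A)) :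
  all a (flatten ss) = all (all a) ss.
Proof. by elim: ss => //= s ss IH; rewrite all_cat IH. Qed.

Lemma allT (A : Type) (a : pred A) (s : seq A) : (forall x, a x) -> all a s.
Proof. by move=> H; elim: s => //= x s ->; rewrite H. Qed.

Definition cf (P : Defs.poly) (X : seq species) (K : seq rate) : int :=
  \sum_(t <- P | perm_eq (tx t) X && perm_eq (tk t) K) tcoef t.

Lemma kcoef_coefx P X K : kcoef (coefx P X) K = cf P X K.
Proof.
rewrite /kcoef /coefx big_map big_filter_cond /cf; apply: eq_bigl => t /=.
by [].
Qed.

Lemma cf_cat P Q X K : cf (P ++ Q) X K = cf P X K + cf Q X K.
Proof. by rewrite /cf big_cat. Qed.

Lemma dot_cat net P Q : dot net (P ++ Q) = dot net P ++ dot net Q.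
Proof. by rewrite /dot map_cat flatten_cat. Qed.

Lemma iter_cat net k P Q :
  iter k (dot net) (P ++ Q) = iter k (dot net) P ++ iter k (dot net) Q.
Proof. by elim: k => //= k ->; rewrite dot_cat. Qed.

Lemma cf_iter_cons net k T P X K :
  cf (iter k (dot net) (T :: P)) X K =
  cf (iter k (dot net) [:: T]) X K + cf (iter k (dot net) P) X K.
Proof. by rewrite -cat1s iter_cat cf_cat. Qed.

Lemma iter_dterm net k T :
  iter k.+1 (dot net) [:: T] = iter k (dot net) (dterm net T).
Proof. by rewrite iterSr /dot /= cats0. Qed.

Lemma big_all0 (A : Type) (a : pred A) (p : pred A) (F : A -> int) (s : seq A) :
  all a s -> (forall x, a x -> p x -> F x = 0) -> \sum_(x <- s | p x) F x = 0.
Proof.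
move=> Ha H; elim: s Ha => [|x s IH] /=; first by rewrite big_nil.
case/andP=> ax Hs; rewrite big_cons IH //.
by case: ifP => // px; rewrite H // addr0.
Qed.

Lemma big_all_eq (A : Type) (a : pred A) (F G : A -> int) (s : seq A) :
  all a s -> (forall x, a x -> F x = G x) -> \sum_(x <- s) F x = \sum_(x <- s) G x.
Proof.
move=> Ha H; elim: s Ha => [|x s IH] /=; first by rewrite !big_nil.
by case/andP=> ax Hs; rewrite !big_cons IH // H.
Qed.

Lemma all_dot_zero net P :
  all (fun t => tcoef t == 0) P -> all (fun t => tcoef t == 0) (dot net P).
Proof.
move=> H; rewrite /dot all_flatten all_map.
apply: sub_all H => t /eqP t0 /=.
rewrite /dterm all_flatten all_map; apply/allP => i _ /=.
by rewrite all_map; apply: allT => s /=; rewrite t0 mul0r.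
Qed.

Lemma cf_zero net k T X K : tcoef T = 0 -> cf (iter k (dot net) [:: T]) X K = 0.
Proof.
move=> T0.
have: all (fun t => tcoef t == 0) (iter k (dot net) [:: T]).
  elim: k => [|k IH] /=; first by rewrite T0 eqxx.
  exact: all_dot_zero.
move=> H; rewrite /cf; apply: (big_all0 H) => t /eqP -> _ //.
Qed.

Definition psi (G X : seq species) : nat := count (fun y => y \notin G) X.

Lemma psi_cat G X Y : psi G (X ++ Y) = (psi G X + psi G Y)%N.
Proof. by rewrite /psi count_cat. Qed.

Lemma psi_rem_at G X i : (i < size X)%N -> (psi G X <= (psi G (rem_at i X)).+1)%N.
Proof.
move=> Hi; rewrite /rem_at psi_cat.
rewrite -{1}(cat_take_drop i X) psi_cat (drop_nth Sp_E Hi) /psi /=.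
set a := count _ _; set b := count _ _.
by case: (_ \notin G); rewrite /= ?add1n ?add0n ?addnS ?leqnSn.
Qed.

Lemma psi_dterm net G T :
  all (fun r => 0 < psi G (rreact r))%N net ->
  all (fun T' => psi G (tx T) <= psi G (tx T'))%N (dterm net T).
Proof.
move=> HC; rewrite /dterm all_flatten all_map; apply/allP => i; rewrite mem_iota /= => Hi.
rewrite all_map /rhs all_map; apply: sub_all HC => r /= Hr.
rewrite psi_cat; apply: leq_trans (psi_rem_at G Hi) _.
by rewrite -addn1 leq_add2l.
Qed.

Lemma all_dot_psi net G a P :
  all (fun r => 0 < psi G (rreact r))%N net ->
  all (fun T => a <= psi G (tx T))%N P -> all (fun T => a <= psi G (tx T))%N (dot net P).
Proof.
move=> HC H; rewrite /dot all_flatten all_map; apply: sub_all H => T /= HT.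
by apply: sub_all (psi_dterm T HC) => T' /=; apply: leq_trans.
Qed.

Lemma perm_psi G X Y : perm_eq X Y -> psi G X = psi G Y.
Proof. by move=> H; rewrite /psi (permP H). Qed.

Lemma dead net G Mh k P K :
  all (fun r => 0 < psi G (rreact r))%N net -> (psi G Mh <= 1)%N ->
  all (fun T => 2 <= psi G (tx T))%N P -> cf (iter k (dot net) P) Mh K = 0.
Proof.
move=> HC HM H.
have: all (fun T => 2 <= psi G (tx T))%N (iter k (dot net) P).
  by elim: k => //= k IH; apply: all_dot_psi.
move=> H2; rewrite /cf; apply: (big_all0 H2) => t /= Ht /andP [Hp _].
by move: Ht; rewrite (perm_psi G Hp) => /leq_trans /(_ HM).
Qed.



Definition coef (r : reaction) (x : species) : int :=
  (count_mem x (rprod r))%:Z - (count_mem x (rreact r))%:Z.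

Lemma dterm_single net c x K0 :
  dterm net (Term c [:: x] K0) =
  [seq Term (c * coef r x) (rreact r) (K0 ++ [:: rrate r]) | r <- net].
Proof. by rewrite /dterm /= cats0 /rhs -map_comp. Qed.

Lemma cf_iter_map net k (A : Type) (f : A -> term) s X K :
  cf (iter k (dot net) (map f s)) X K = \sum_(a <- s) cf (iter k (dot net) [:: f a]) X K.
Proof.
elim: s => [|a s IH] /=.
  have E : iter k (dot net) [::] = [::] by elim: k => //= k ->.
  by rewrite E /cf !big_nil.
by rewrite cf_iter_cons IH big_cons.
Qed.

Lemma cf_single_step net k c x K0 X K :
  cf (iter k.+1 (dot net) [:: Term c [:: x] K0]) X K =
  \sum_(r <- net) cf (iter k (dot net) [:: Term (c * coef r x) (rreact r) (K0 ++ [:: rrate r])]) X K.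
Proof. by rewrite iter_dterm dterm_single cf_iter_map. Qed.

Lemma cf1 T X K : ~~ perm_eq (tx T) X -> cf [:: T] X K = 0.
Proof. by move=> H; rewrite /cf big_cons big_nil (negbTE H). Qed.

Lemma selfdead net G Mh x :
  all (fun r => 0 < psi G (rreact r))%N net -> (psi G Mh <= 1)%N -> size Mh != 1%N ->
  all (fun r => (coef r x == 0) || (1 < psi G (rreact r))%N || (rreact r == [:: x])) net ->
  forall k c K0 K, cf (iter k (dot net) [:: Term c [:: x] K0]) Mh K = 0.
Proof.
move=> HC HM HS Hx; elim=> [|k IH] c K0 K.
  rewrite /= cf1 //; apply/negP => /perm_size /= H.
  by move: HS; rewrite -H.
rewrite cf_single_step; apply: (big_all0 Hx) => r /orP [/orP [/eqP c0|H2]|/eqP E] _.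
- by apply: cf_zero; rewrite /= c0 mulr0.
- by apply: (dead _ _ HC HM); rewrite /= H2.
- by rewrite E IH.
Qed.

Definition consw (w : species) (T : term) := Term (tcoef T) (w :: tx T) (tk T).

Lemma dterm_consw net w T :
  dterm net (consw w T) =
  [seq Term (tcoef T * tcoef s) (tx T ++ tx s) (tk T ++ tk s) | s <- rhs net w]
  ++ map (consw w) (dterm net T).
Proof.
rewrite /dterm /= {1}/rem_at /= drop0; congr (_ ++ _).
have -> : iota 1 (size (tx T)) = map (addn 1) (iota 0 (size (tx T))).
  by rewrite -iotaDl.
rewrite map_flatten -!map_comp.
congr flatten; apply: eq_map => i /=; rewrite -map_comp; apply: eq_map => s /=.
by [].
Qed.

Lemma iter_nil net k : iter k (dot net) [::] = [::].
Proof. by elim: k => //= k ->. Qed.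

Lemma touch net G w Y :
  all (fun r => 0 < psi G (rreact r))%N net -> (psi G (w :: Y) <= 1)%N ->
  forall k T K, (0 < psi G (tx T))%N ->
  cf (iter k (dot net) [:: consw w T]) (w :: Y) K = cf (iter k (dot net) [:: T]) Y K.
Proof.
move=> HC HM; elim=> [|k IH] T K HT.
  by rewrite /= /cf !big_cons !big_nil /= perm_cons.
rewrite !iter_dterm dterm_consw iter_cat cf_cat.
rewrite (dead _ _ HC HM) ?add0r; last first.
  rewrite all_map /rhs all_map; apply: sub_all HC => r /= Hr.
  by rewrite psi_cat; exact: (leq_add HT Hr).
have HA := psi_dterm T HC.
move: (dterm net T) HA; elim=> [|T' P IHP] /=; first by rewrite !iter_nil /cf !big_nil.
case/andP=> H1 H2; rewrite cf_iter_cons [in RHS]cf_iter_cons IHP // IH //.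
exact: leq_trans HT H1.
Qed.

Lemma dterm_tw net c t w K0 :
  dterm net (Term c [:: t; w] K0) =
  map (consw w) (dterm net (Term c [:: t] K0)) ++
  [seq Term (c * tcoef s) (t :: tx s) (K0 ++ tk s) | s <- rhs net w].
Proof. by rewrite /dterm /= !cats0 -map_comp. Qed.

Lemma touch_tw net G t w Y :
  all (fun r => 0 < psi G (rreact r))%N net -> (psi G (w :: Y) <= 1)%N ->
  (0 < psi G [:: t])%N -> ~~ perm_eq [:: t; w] (w :: Y) -> ~~ perm_eq [:: t] Y ->
  forall k c K0 K,
  cf (iter k (dot net) [:: Term c [:: t; w] K0]) (w :: Y) K =
  cf (iter k (dot net) [:: Term c [:: t] K0]) Y K.
Proof.
move=> HC HM Ht H1 H2 [|k] c K0 K; first by rewrite /= !cf1.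
rewrite !iter_dterm dterm_tw iter_cat cf_cat.
rewrite [X in _ + X](dead _ _ HC HM) ?addr0; last first.
  rewrite all_map /rhs all_map; apply: sub_all HC => r /= Hr.
  by move: Ht; rewrite /psi /= addn0 => Ht; exact: (leq_add Ht Hr).
have HA := psi_dterm (Term c [:: t] K0) HC.
move: (dterm net (Term c [:: t] K0)) HA; elim=> [|T' P IHP] /=; first by rewrite !iter_nil /cf !big_nil.
case/andP=> H3 H4; rewrite cf_iter_cons [in RHS]cf_iter_cons IHP // (touch HC HM) //.
exact: leq_trans Ht H3.
Qed.

Definition scaleT (c : int) (K0 : seq rate) (T : term) :=
  Term (c * tcoef T) (tx T) (K0 ++ tk T).

Lemma dterm_scale net c K0 T : dterm net (scaleT c K0 T) = map (scaleT c K0) (dterm net T).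
Proof.
rewrite /dterm map_flatten -map_comp; congr flatten; apply: eq_map => i /=.
rewrite -map_comp; apply: eq_map => s /=.
by rewrite /scaleT /= mulrA catA.
Qed.

Lemma iter_scale net k c K0 P :
  iter k (dot net) (map (scaleT c K0) P) = map (scaleT c K0) (iter k (dot net) P).
Proof.
elim: k => //= k ->; rewrite /dot map_flatten -!map_comp; congr flatten.
by apply: eq_map => T /=; rewrite dterm_scale.
Qed.

Definition kshift (c : int) (K0 : seq rate) (Q : kpoly) : kpoly :=
  [seq (c * q.1, K0 ++ q.2) | q <- Q].

Lemma coefx_scale c K0 P X : coefx (map (scaleT c K0) P) X = kshift c K0 (coefx P X).
Proof.
rewrite /coefx /kshift filter_map -!map_comp; apply: eq_map => T //.
Qed.

Lemma cf_scaled net k c x K0 X K :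
  cf (iter k (dot net) [:: Term c x K0]) X K =
  kcoef (kshift c K0 (coefx (iter k (dot net) [:: Term 1 x [::]]) X)) K.
Proof.
rewrite -coefx_scale -iter_scale kcoef_coefx /= /scaleT /= mulr1 cats0 //.
Qed.

Lemma split_perm (K0 K : seq rate) :
  (exists K2, perm_eq K (K0 ++ K2)) \/ (forall q, ~~ perm_eq (K0 ++ q) K).
Proof.
elim: K0 K => [|a K0 IH] K; first by left; exists K.
case Ha: (a \in K); last first.
  right => q; apply/negP => /perm_mem /(_ a); rewrite inE eqxx /= Ha => //.
case: (IH (rem a K)) => [[K2 H]|H].
  left; exists K2; apply: perm_trans (perm_to_rem Ha) _; by rewrite /= perm_cons.
right => q; apply/negP => Hp.
have : perm_eq (a :: K0 ++ q) (a :: rem a K) := perm_trans Hp (perm_to_rem Ha).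
by rewrite perm_cons (negbTE (H q)).
Qed.

Lemma kcoef_kshift c K0 Q K K2 : perm_eq K (K0 ++ K2) ->
  kcoef (kshift c K0 Q) K = c * kcoef Q K2.
Proof.
move=> HK; rewrite /kcoef /kshift big_map mulr_sumr; apply: eq_bigl => q /=.
by rewrite (permPr HK) perm_cat2l.
Qed.

Lemma kcoef_kshift0 c K0 Q K : (forall q, ~~ perm_eq (K0 ++ q) K) ->
  kcoef (kshift c K0 Q) K = 0.
Proof.
by move=> H; rewrite /kcoef /kshift big_map big1 // => q; rewrite /= (negbTE (H _)).
Qed.

Lemma kshift_zero c K0 Q K : (forall K', kcoef Q K' = 0) -> kcoef (kshift c K0 Q) K = 0.
Proof.
move=> H; case: (split_perm K0 K) => [[K2 HK]|HK].
  by rewrite (kcoef_kshift _ _ HK) H mulr0.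
exact: kcoef_kshift0.
Qed.

Lemma kshift_perm c1 c2 K1 K2 Q K : c1 = c2 -> perm_eq K1 K2 ->
  kcoef (kshift c1 K1 Q) K = kcoef (kshift c2 K2 Q) K.
Proof.
move=> -> HK; rewrite /kcoef /kshift !big_map; apply: eq_bigl => q /=.
by rewrite (perm_catr _ HK).
Qed.

Local Close Scope ring_scope.


Lemma eq_spE (x y : species) : (x == y) = (sp_code x == sp_code y).
Proof. by []. Qed.

Lemma in_class_low N L n k X : (1 <= N)%N -> (1 <= k <= n - 1)%N -> (n <= N)%N ->
  in_class N L k X -> exists j, X = Sp_S k j.
Proof.
move=> HN Hk Hn [[_ [j [_ ->]]]|[[H _]|[H _]]]; first by exists j.
- by exfalso; lia.
- by exfalso; lia.
Qed.

Lemma in_class_top N L X : in_class N L N.*2.+1 X -> X = Sp_E.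
Proof. move=> [[H _]|[[H _]|[_ ->]]] //; exfalso; move: H; rewrite -addnn; lia. Qed.

Record hyps (N : nat) (L : nat -> nat) (n : nat) (U : species) (M : seq species) : Prop := {
  hN : (1 <= N)%N;
  hL : forall m, (1 <= m <= N)%N -> (1 <= L m)%N;
  hn : (2 <= n <= N)%N;
  hU : intermediate N L U;
  hM : forall X, X \in M -> X = Sp_E \/ exists k j, X = Sp_S k j /\ (1 <= k <= n - 1)%N;
  hR : forall X1 X2, X1 \in M -> X2 \in M -> ~ reacts N L X1 X2;
  ht : Sp_S (n - 1) (L (n - 1)) \notin M }.


Lemma hM_F N L n U M (H : hyps N L n U M) m : Sp_F m \notin M.
Proof. by apply/negP => /(hM H) [//|[k [j [//]]]]. Qed.
Lemma hM_U N L n U M (H : hyps N L n U M) m j : Sp_U m j \notin M.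
Proof. by apply/negP => /(hM H) [//|[k [j' [//]]]]. Qed.
Lemma hM_V N L n U M (H : hyps N L n U M) m j : Sp_V m j \notin M.
Proof. by apply/negP => /(hM H) [//|[k [j' [//]]]]. Qed.
Lemma hM_S N L n U M (H : hyps N L n U M) m j : (n <= m)%N -> Sp_S m j \notin M.
Proof.
move=> Hm; apply/negP => /(hM H) [//|[k [j' [[Hmk _] Hk]]]].
by move: (hn H) => Hn; lia.
Qed.

Definition GG (L : nat -> nat) n M := Sp_S n (L n - 1) :: M.

Lemma nG_F N L n U M (H : hyps N L n U M) m : Sp_F m \notin GG L n M.
Proof. by rewrite inE negb_or (hM_F H) andbT. Qed.
Lemma nG_U N L n U M (H : hyps N L n U M) m j : Sp_U m j \notin GG L n M.
Proof. by rewrite inE negb_or (hM_U H) andbT. Qed.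
Lemma nG_V N L n U M (H : hyps N L n U M) m j : Sp_V m j \notin GG L n M.
Proof. by rewrite inE negb_or (hM_V H) andbT. Qed.
Lemma nG_S N L n U M (H : hyps N L n U M) m j : (n <= m)%N -> (m, j) != (n, L n - 1) ->
  Sp_S m j \notin GG L n M.
Proof. by move=> Hm Hne; rewrite inE negb_or (hM_S H) // andbT eq_spE. Qed.
Lemma nG_s N L n U M (H : hyps N L n U M) : Sp_S n (L n) \notin GG L n M.
Proof.
move: (hn H) => /andP [H2 H3]; have HL : (0 < L n)%N by apply: (hL H); lia.
apply: (nG_S H) => //; rewrite xpair_eqE negb_and eqxx /=; apply/eqP; lia.
Qed.
Lemma nG_Sn1 N L n U M (H : hyps N L n U M) j : Sp_S n.+1 j \notin GG L n M.
Proof. by apply: (nG_S H) => //; rewrite xpair_eqE negb_and /=; apply/orP; left; apply/eqP; lia. Qed.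
Lemma nG_t N L n U M (H : hyps N L n U M) : Sp_S (n - 1) (L (n - 1)) \notin GG L n M.
Proof.
rewrite inE negb_or (ht H) andbT eq_spE /= xpair_eqE negb_and; apply/orP; left.
rewrite xpair_eqE negb_and /=; apply/eqP; move: (hn H); lia.
Qed.
Lemma nG_Uint N L n U M (H : hyps N L n U M) : U \notin GG L n M.
Proof. by case: (hU H) => m [j [_ _ [->|->]]]; [apply: (nG_U H) | apply: (nG_V H)]. Qed.

Lemma psi_M N L n U M (H : hyps N L n U M) : psi (GG L n M) M = 0%N.
Proof.
apply/eqP; rewrite /psi -leqn0 leqNgt -has_count; apply/hasPn => y Hy /=.
by rewrite negbK inE Hy orbT.
Qed.

Lemma psi_Mh N L n U M (H : hyps N L n U M) :
  psi (GG L n M) (Sp_S n (L n - 1) :: U :: M) = 1%N.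
Proof.
by rewrite /psi /= -/(psi _ M) (psi_M H) (nG_Uint H) inE eqxx.
Qed.

Lemma In_mem (T : eqType) (x : T) s : x \in s -> List.In x s.
Proof. elim: s => //= y s IH; rewrite inE => /orP [/eqP ->|/IH]; by [left|right]. Qed.

Lemma In_map (A B : Type) (f : A -> B) x s : List.In x s -> List.In (f x) (map f s).
Proof. elim: s => //= y s IH [->|/IH]; by [left|right]. Qed.

Lemma In_flatten (A : Type) (x : A) s ss : List.In x s -> List.In s ss -> List.In x (flatten ss).
Proof.
have Hl : forall (s1 s2 : seq A), List.In x s1 -> List.In x (s1 ++ s2).
  by move=> s1 s2; elim: s1 => //= y s1 IH [->|/IH]; [left|right].
have Hr : forall (s1 s2 : seq A), List.In x s2 -> List.In x (s1 ++ s2).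
  by move=> s1 s2 H; elim: s1 => //= y s1 IH; right.
move=> Hx; elim: ss => //= s' ss IH [->|/IH H]; [exact: Hl | exact: Hr].
Qed.

Lemma In_network N L m j r : (1 <= m <= N)%N -> (1 <= j <= L m)%N ->
  List.In r (layer_rxns L m j) -> List.In r (network N L).
Proof.
move=> Hm Hj Hr; rewrite /network.
apply: (In_flatten (s := flatten [seq layer_rxns L m j0 | j0 <- iota 1 (L m)])).
  apply: (In_flatten Hr); apply: In_map; apply: In_mem; rewrite mem_iota; lia.
apply: (@In_map _ _ (fun m => flatten [seq layer_rxns L m j0 | j0 <- iota 1 (L m)])).
apply: In_mem; rewrite mem_iota; lia.
Qed.

Lemma all_network N L (P : pred reaction) :
  (forall m j, (1 <= m <= N)%N -> (1 <= j <= L m)%N -> all P (layer_rxns L m j)) ->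
  all P (network N L).
Proof.
move=> H; rewrite /network all_flatten all_map; apply/allP => m; rewrite mem_iota => Hm /=.
rewrite all_flatten all_map; apply/allP => j; rewrite mem_iota => Hj /=.
apply: H; lia.
Qed.

Lemma C1_Ra N L n U M (H : hyps N L n U M) m j : (1 <= m <= N)%N -> (1 <= j <= L m)%N ->
  (enz L m \notin GG L n M) || (Sp_S m j.-1 \notin GG L n M).
Proof.
move=> Hm Hj; rewrite -negb_and; apply/negP => /andP [E1 E2].
move: (hn H) => Hn.
move: E2; rewrite inE => /orP [/eqP E2|E2].
  case: E2 => Em Ej; subst m.
  have Et : enz L n = Sp_S (n - 1) (L (n - 1)).
    rewrite /enz; case En: n => [|[|k]]; try (exfalso; lia).
    by rewrite /= subn1.
  by move: E1; rewrite Et (negbTE (nG_t H)).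
move: E1; rewrite inE => /orP [/eqP E1|E1].
  case: m Hm Hj E1 E2 => [|[|m]] //= Hm Hj [Em Ej] _.
  have HL : (0 < L n)%N by apply: (hL H); lia.
  rewrite Em in Ej; lia.
apply: (hR H E1 E2).
exists (Rxn (Ra m j) [:: enz L m; Sp_S m j.-1] [:: Sp_U m j]); split.
  by apply: (In_network Hm Hj); left.
split; first by [].
exists (Sp_U m j); split => //; exists m, j; split => //; by left.
Qed.

Lemma C1 N L n U M (H : hyps N L n U M) :
  all (fun r => 0 < psi (GG L n M) (rreact r))%N (network N L).
Proof.
apply: all_network => m j Hm Hj /=.
rewrite /psi /= (nG_U H) (nG_F H) (nG_V H) /= !andbT.
by case/orP: (C1_Ra H Hm Hj) => ->; rewrite ?addn0 ?addn1.
Qed.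

Lemma enz_neqV L m a b : (enz L m == Sp_V a b) = false.
Proof. by case: m => [|[|m]]. Qed.
Lemma enz_neqU L m a b : (enz L m == Sp_U a b) = false.
Proof. by case: m => [|[|m]]. Qed.
Lemma enz_neqF L m a : (enz L m == Sp_F a) = false.
Proof. by case: m => [|[|m]]. Qed.

Lemma C2 N L n U M (H : hyps N L n U M) :
  all (fun r => (coef r (Sp_V n (L n)) == 0%R) || (1 < psi (GG L n M) (rreact r))%N
                || (rreact r == [:: Sp_V n (L n)])) (network N L).
Proof.
apply: all_network => m j Hm Hj /=.
rewrite /coef /= !enz_neqV !eq_spE /= !xpair_eqE /=.
case E: ((m == n) && (j == L n)) => /=; last by [].
case/andP: E => /eqP -> /eqP ->.
by rewrite (nG_F H) (nG_s H) !eqxx /= !orbT.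
Qed.

Lemma enz_succ L n : (1 <= n)%N -> enz L n.+1 = Sp_S n (L n).
Proof. by case: n. Qed.

Lemma match_n (L : nat -> nat) n : (1 <= n)%N ->
  match n with 0 => Sp_E | _.+1 => Sp_S n (L n) end = Sp_S n (L n).
Proof. by case: n. Qed.

Lemma C3 N L n U M (H : hyps N L n U M) j' :
  all (fun r => (coef r (Sp_U n.+1 j') == 0%R) || (1 < psi (GG L n M) (rreact r))%N
                || (rreact r == [:: Sp_U n.+1 j'])) (network N L).
Proof.
apply: all_network => m j Hm Hj /=.
rewrite /coef /= !enz_neqU !eq_spE /= !xpair_eqE /=.
case E: ((m == n.+1) && (j == j')) => /=; last by [].
case/andP: E => /eqP Em /eqP Ej; subst m j.
rewrite !eqxx /= !orbT !andbT.
move: (hn H) => Hn; rewrite match_n; last by lia.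
by rewrite (nG_s H) (nG_Sn1 H).
Qed.

Local Open Scope ring_scope.


Definition Mhat L n (U : species) M := Sp_S n (L n - 1) :: U :: M.

Definition Fr N L n U M k (c : int) K0 K x r :=
  cf (iter k (dot (network N L)) [:: Term (c * coef r x)%R (rreact r) (K0 ++ [:: rrate r])])
     (Mhat L n U M) K.

Lemma size_Mhat L n U M : size (Mhat L n U M) != 1%N.
Proof. by []. Qed.

Lemma psi_Mhat N L n U M (H : hyps N L n U M) : (psi (GG L n M) (Mhat L n U M) <= 1)%N.
Proof. by rewrite /Mhat (psi_Mh H). Qed.

Lemma Fr_zero N L n U M (H : hyps N L n U M) k c K0 K x r :
  (coef r x == 0%R) || (1 < psi (GG L n M) (rreact r))%N
  || (rreact r == [:: Sp_V n (L n)])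
  || (match rreact r with [:: Sp_U m _] => m == n.+1 | _ => false end) ->
  Fr N L n U M k c K0 K x r = 0%R.
Proof.
rewrite /Fr; case/orP=> [/orP [/orP [/eqP c0|H2]|/eqP E]|HU].
- by apply: cf_zero; rewrite /= c0 GRing.mulr0.
- by apply: (dead _ _ (C1 H) (psi_Mhat H)); rewrite /= H2.
- rewrite E; apply: (selfdead (C1 H) (psi_Mhat H) (size_Mhat _ _ _ _)); exact: (C2 H).
- case E: (rreact r) HU => [|y [|z l]] //=; case: y E => //= m j E /eqP Em.
  rewrite Em; apply: (selfdead (C1 H) (psi_Mhat H) (size_Mhat _ _ _ _)); exact: (C3 H).
Qed.

Lemma sum_network N L (F : reaction -> int) :
  \sum_(r <- network N L) F r =
  \sum_(m <- iota 1 N) \sum_(j <- iota 1 (L m)) \sum_(r <- layer_rxns L m j) F r.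
Proof.
rewrite /network big_flatten big_map; apply: eq_bigr => m _.
by rewrite big_flatten big_map.
Qed.

Lemma sum_single N L (F : nat -> nat -> int) n0 j0 :
  (1 <= n0 <= N)%N -> (1 <= j0 <= L n0)%N ->
  (forall m j, (1 <= m <= N)%N -> (1 <= j <= L m)%N -> (m != n0) || (j != j0) -> F m j = 0%R) ->
  \sum_(m <- iota 1 N) \sum_(j <- iota 1 (L m)) F m j = F n0 j0.
Proof.
move=> Hn Hj HF.
rewrite (bigD1_seq n0) ?iota_uniq ?mem_iota /=; last by lia.
rewrite [X in (_ + X)%R]big1_seq ?GRing.addr0; last first.
  move=> m /andP [Hm]; rewrite mem_iota => Hm'.
  apply: big1_seq => j; rewrite mem_iota => Hj'; apply: HF; try lia.
rewrite (bigD1_seq j0) ?iota_uniq ?mem_iota /=; last by lia.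
rewrite [X in (_ + X)%R]big1_seq ?GRing.addr0 //.
move=> j /andP [Hjj]; rewrite mem_iota => Hj'; apply: HF; try lia.
all: lia.
Qed.

Lemma enz_eqS L m a b : (1 <= a)%N -> (enz L m == Sp_S a b) = (m == a.+1) && (L a == b).
Proof.
move=> Ha; case: m => [|[|m]]; rewrite /= eq_spE /= ?xpair_eqE /=.
- by case: a Ha.
- by case: a Ha.
- by rewrite eqSS; case: eqP => // <-.
Qed.

Lemma enz_n L n : (2 <= n)%N -> enz L n = Sp_S (n - 1) (L (n - 1)%N).
Proof. by case: n => [|[|n]] //= _; rewrite subn1. Qed.

Lemma eqS a b c d : (Sp_S a b == Sp_S c d) = (a == c) && (b == d).
Proof. by rewrite eq_spE /= !xpair_eqE. Qed.

Ltac spsimp := rewrite /coef /= ?eqS ?eq_spE /= ?xpair_eqE /=.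

Ltac zs H := rewrite /psi /= ?(nG_F H) ?(nG_V H) ?(nG_U H) ?(nG_s H) ?(nG_Sn1 H); spsimp; lia.

Lemma six_s N L n U M (H : hyps N L n U M) k c K0 K m j :
  (1 <= m <= N)%N -> (1 <= j <= L m)%N ->
  \sum_(r <- layer_rxns L m j) Fr N L n U M k c K0 K (Sp_S n (L n)) r =
  if (m == n) && (j == L n) then
    Fr N L n U M k c K0 K (Sp_S n (L n)) (Rxn (Rc n (L n)) [:: Sp_U n (L n)] [:: enz L n; Sp_S n (L n)])
  else 0%R.
Proof.
move=> Hm Hj; move: (hn H) => Hn.
have Z := fun r => @Fr_zero N L n U M H k c K0 K (Sp_S n (L n)) r.
rewrite /layer_rxns !big_cons big_nil GRing.addr0.
have [Emn|Emn] := eqVneq m n.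
  subst m; rewrite /= (enz_n L (n:=n)); last by lia.
  rewrite (Z (Rxn (Ra n j) _ _)); last by zs H.
  rewrite (Z (Rxn (Rb n j) _ _)); last by zs H.
  rewrite (Z (Rxn (Rct n j) _ _)); last by zs H.
  have [Ej|Ej] := eqVneq j (L n).
    subst j; rewrite (Z (Rxn (Defs.Rat n (L n)) _ _)); last by zs H.
    rewrite (Z (Rxn (Rbt n (L n)) _ _)); last by rewrite eqxx /= !orbT.
    by rewrite !GRing.add0r GRing.addr0.
  rewrite (Z (Rxn (Rc n j) _ _)); last by zs H.
  rewrite (Z (Rxn (Defs.Rat n j) _ _)); last by zs H.
  rewrite (Z (Rxn (Rbt n j) _ _)); last by zs H.
  by rewrite !GRing.add0r.
have [Emn1|Emn1] := eqVneq m n.+1.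
  subst m; rewrite (enz_succ L (n:=n)); last by lia.
  rewrite (Z (Rxn (Ra n.+1 j) _ _)); last by zs H.
  rewrite (Z (Rxn (Rb n.+1 j) _ _)); last by rewrite /= eqxx !orbT.
  rewrite (Z (Rxn (Rc n.+1 j) _ _)); last by rewrite /= eqxx !orbT.
  rewrite (Z (Rxn (Defs.Rat n.+1 j) _ _)); last by zs H.
  rewrite (Z (Rxn (Rbt n.+1 j) _ _)); last by zs H.
  rewrite (Z (Rxn (Rct n.+1 j) _ _)); last by zs H.
  by rewrite /= !GRing.add0r.
rewrite /=.
have E1 : (enz L m == Sp_S n (L n)) = false by rewrite enz_eqS; [lia | lia].
rewrite (Z (Rxn (Ra m j) _ _)); last by rewrite /coef /= E1; spsimp; lia.
rewrite (Z (Rxn (Rb m j) _ _)); last by rewrite /coef /= E1; spsimp; lia.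
rewrite (Z (Rxn (Rc m j) _ _)); last by rewrite /coef /= E1; spsimp; lia.
rewrite (Z (Rxn (Defs.Rat m j) _ _)); last by spsimp; lia.
rewrite (Z (Rxn (Rbt m j) _ _)); last by spsimp; lia.
rewrite (Z (Rxn (Rct m j) _ _)); last by spsimp; lia.
by rewrite !GRing.add0r.
Qed.

Lemma six_u N L n U M (H : hyps N L n U M) k c K0 K m j :
  (1 <= m <= N)%N -> (1 <= j <= L m)%N ->
  \sum_(r <- layer_rxns L m j) Fr N L n U M k c K0 K (Sp_U n (L n)) r =
  if (m == n) && (j == L n) then
    Fr N L n U M k c K0 K (Sp_U n (L n)) (Rxn (Ra n (L n)) [:: enz L n; Sp_S n (L n).-1] [:: Sp_U n (L n)])
    + Fr N L n U M k c K0 K (Sp_U n (L n)) (Rxn (Rb n (L n)) [:: Sp_U n (L n)] [:: enz L n; Sp_S n (L n).-1])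
    + Fr N L n U M k c K0 K (Sp_U n (L n)) (Rxn (Rc n (L n)) [:: Sp_U n (L n)] [:: enz L n; Sp_S n (L n)])
  else 0%R.
Proof.
move=> Hm Hj; move: (hn H) => Hn.
have Z := fun r => @Fr_zero N L n U M H k c K0 K (Sp_U n (L n)) r.
rewrite /layer_rxns !big_cons big_nil GRing.addr0.
rewrite (Z (Rxn (Defs.Rat m j) _ _)); last by spsimp; lia.
rewrite (Z (Rxn (Rbt m j) _ _)); last by spsimp; lia.
rewrite (Z (Rxn (Rct m j) _ _)); last by spsimp; lia.
rewrite !GRing.addr0.
case E: ((m == n) && (j == L n)).
  by case/andP: E => /eqP -> /eqP ->; rewrite GRing.addrA.
rewrite (Z (Rxn (Ra m j) _ _)); last by rewrite /coef /= enz_neqU; spsimp; rewrite E.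
rewrite (Z (Rxn (Rb m j) _ _)); last by rewrite /coef /= enz_neqU; spsimp; rewrite E.
rewrite (Z (Rxn (Rc m j) _ _)); last by rewrite /coef /= enz_neqU; spsimp; rewrite E.
by rewrite !GRing.add0r.
Qed.

Lemma sum_s N L n U M (H : hyps N L n U M) k c K0 K :
  \sum_(r <- network N L) Fr N L n U M k c K0 K (Sp_S n (L n)) r =
  Fr N L n U M k c K0 K (Sp_S n (L n)) (Rxn (Rc n (L n)) [:: Sp_U n (L n)] [:: enz L n; Sp_S n (L n)]).
Proof.
move: (hn H) => Hn; have HL : (1 <= L n)%N by apply: (hL H); lia.
rewrite sum_network (sum_single (n0 := n) (j0 := L n)); first by rewrite six_s ?eqxx //; lia.
- lia.
- lia.
move=> m j Hm Hj Hne; rewrite six_s //.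
by case: (m == n) Hne => //=; case: (j == L n).
Qed.

Lemma sum_u N L n U M (H : hyps N L n U M) k c K0 K :
  \sum_(r <- network N L) Fr N L n U M k c K0 K (Sp_U n (L n)) r =
    Fr N L n U M k c K0 K (Sp_U n (L n)) (Rxn (Ra n (L n)) [:: enz L n; Sp_S n (L n).-1] [:: Sp_U n (L n)])
    + Fr N L n U M k c K0 K (Sp_U n (L n)) (Rxn (Rb n (L n)) [:: Sp_U n (L n)] [:: enz L n; Sp_S n (L n).-1])
    + Fr N L n U M k c K0 K (Sp_U n (L n)) (Rxn (Rc n (L n)) [:: Sp_U n (L n)] [:: enz L n; Sp_S n (L n)]).
Proof.
move: (hn H) => Hn; have HL : (1 <= L n)%N by apply: (hL H); lia.
rewrite sum_network (sum_single (n0 := n) (j0 := L n)); first by rewrite six_u ?eqxx //; lia.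
- lia.
- lia.
move=> m j Hm Hj Hne; rewrite six_u //.
by case: (m == n) Hne => //=; case: (j == L n).
Qed.



Lemma coef_Ra_u L n : (2 <= n)%N ->
  coef (Rxn (Ra n (L n)) [:: enz L n; Sp_S n (L n).-1] [:: Sp_U n (L n)]) (Sp_U n (L n)) = 1.
Proof. by move=> Hn; rewrite /coef /= enz_neqU eqxx; spsimp. Qed.

Lemma coef_Rb_u L n : (2 <= n)%N ->
  coef (Rxn (Rb n (L n)) [:: Sp_U n (L n)] [:: enz L n; Sp_S n (L n).-1]) (Sp_U n (L n)) = -1.
Proof. by move=> Hn; rewrite /coef /= enz_neqU eqxx; spsimp. Qed.

Lemma coef_Rc_u L n : (2 <= n)%N ->
  coef (Rxn (Rc n (L n)) [:: Sp_U n (L n)] [:: enz L n; Sp_S n (L n)]) (Sp_U n (L n)) = -1.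
Proof. by move=> Hn; rewrite /coef /= enz_neqU eqxx; spsimp. Qed.

Lemma coef_Rc_s L n : (2 <= n)%N ->
  coef (Rxn (Rc n (L n)) [:: Sp_U n (L n)] [:: enz L n; Sp_S n (L n)]) (Sp_S n (L n)) = 1.
Proof.
move=> Hn; rewrite /coef /= enz_eqS; last by lia.
by rewrite eqxx; spsimp; rewrite (_ : (n == n.+1) = false) //; lia.
Qed.

Definition tS (L : nat -> nat) n := Sp_S (n - 1) (L (n - 1)%N).

Definition gg N L n U M k c K0 K :=
  cf (iter k (dot (network N L)) [:: Term c [:: Sp_U n (L n)] K0]) (Mhat L n U M) K.
Definition hh N L n U M k c K0 K :=
  cf (iter k (dot (network N L)) [:: Term c [:: tS L n] K0]) (U :: M) K.

Lemma tw_lemma N L n U M (H : hyps N L n U M) k c K0 K :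
  cf (iter k (dot (network N L)) [:: Term c [:: enz L n; Sp_S n (L n).-1] K0]) (Mhat L n U M) K
  = hh N L n U M k c K0 K.
Proof.
move: (hn H) => Hn; rewrite enz_n; last by lia.
rewrite -subn1 /Mhat /hh /tS.
have Hnt := nG_t H.
have HM : (psi (GG L n M) (Sp_S n (L n - 1) :: U :: M) <= 1)%N by rewrite (psi_Mh H).
have Ht : (0 < psi (GG L n M) [:: Sp_S (n - 1) (L (n - 1)%N)])%N by rewrite /psi /= Hnt.
have P1 : ~~ perm_eq [:: Sp_S (n - 1) (L (n - 1)%N); Sp_S n (L n - 1)] (Sp_S n (L n - 1) :: U :: M).
  apply/negP => /perm_mem /(_ (Sp_S (n - 1) (L (n - 1)%N))).
  rewrite !inE eqxx /= => /esym /orP [/eqP E|/orP [/eqP E|E]].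
  + by case: E; lia.
  + by case: (hU H) E => m [j [_ _ [->|->]]].
  + by move: (ht H); rewrite E.
have P2 : ~~ perm_eq [:: Sp_S (n - 1) (L (n - 1)%N)] (U :: M).
  apply/negP => /perm_mem /(_ (Sp_S (n - 1) (L (n - 1)%N))).
  rewrite !inE eqxx /= => /esym /orP [/eqP E|E].
  + by case: (hU H) E => m [j [_ _ [->|->]]].
  + by move: (ht H); rewrite E.
exact: (touch_tw (C1 H) HM Ht P1 P2).
Qed.

Lemma g_step N L n U M (H : hyps N L n U M) k c K0 K :
  gg N L n U M k.+1 c K0 K =
  hh N L n U M k c (K0 ++ [:: Ra n (L n)]) K
  + gg N L n U M k (- c) (K0 ++ [:: Rb n (L n)]) K
  + gg N L n U M k (- c) (K0 ++ [:: Rc n (L n)]) K.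
Proof.
move: (hn H) => Hn.
rewrite /gg cf_single_step.
have := sum_u H k c K0 K; rewrite /Fr => ->.
rewrite coef_Ra_u ?coef_Rb_u ?coef_Rc_u; try lia.
by rewrite !mulr1 !mulrN1 tw_lemma.
Qed.

Lemma s_step N L n U M (H : hyps N L n U M) k K :
  cf (iterd N L k.+1 (Sp_S n (L n))) (Mhat L n U M) K =
  gg N L n U M k 1 [:: Rc n (L n)] K.
Proof.
move: (hn H) => Hn.
rewrite /iterd cf_single_step.
have := sum_s H k 1 [::] K; rewrite /Fr => ->.
by rewrite coef_Rc_s ?mul1r //; lia.
Qed.

Lemma kcoef_cat A B K : kcoef (A ++ B) K = kcoef A K + kcoef B K.
Proof. by rewrite /kcoef big_cat. Qed.
Lemma kcoef_nil K : kcoef [::] K = 0.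
Proof. by rewrite /kcoef big_nil. Qed.
Lemma kshift_cat c K1 A B : kshift c K1 (A ++ B) = kshift c K1 A ++ kshift c K1 B.
Proof. by rewrite /kshift map_cat. Qed.
Lemma kshift_comp c K1 c' K2 Q : kshift c K1 (kshift c' K2 Q) = kshift (c * c') (K1 ++ K2) Q.
Proof. by rewrite /kshift -map_comp; apply: eq_map => q /=; rewrite mulrA catA. Qed.
Lemma kshift_opp c K1 Q : kshift c K1 (kopp Q) = kshift (- c) K1 Q.
Proof. by rewrite /kshift /kopp -map_comp; apply: eq_map => q /=; rewrite mulrN mulNr. Qed.
Lemma kopp_cat A B : kopp (A ++ B) = kopp A ++ kopp B.
Proof. by rewrite /kopp map_cat. Qed.

Lemma hh_kshift N L n U M k c K0 K :
  hh N L n U M k c K0 K = kcoef (kshift c K0 (coefx (iterd N L k (tS L n)) (U :: M))) K.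
Proof. by rewrite /hh cf_scaled. Qed.

Theorem main_aux (N : nat) (L : nat -> nat) (n : nat)
    (U : species) (M : seq species) (l0 : nat) :
  hyps N L n U M ->
  (1 <= l0)%N ->
  appears (iterd N L l0 (Sp_S (n - 1) (L (n - 1)%N))) (U :: M) ->
  (forall l, (1 <= l < l0)%N ->
     ~ appears (iterd N L l (Sp_S (n - 1) (L (n - 1)%N))) (U :: M)) ->
  let C := coefx (iterd N L l0 (Sp_S (n - 1) (L (n - 1)%N))) (U :: M) in
  let Ct := coefx (iterd N L l0.+1 (Sp_S (n - 1) (L (n - 1)%N))) (U :: M) in
  let Mhat := Sp_S n (L n - 1)%N :: U :: M in
  let s := Sp_S n (L n) in
  let ca := kmul (kvar (Rc n (L n))) (kvar (Ra n (L n))) in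
  let Kn := kadd (kvar (Rb n (L n))) (kvar (Rc n (L n))) in
  [/\ appears (iterd N L (l0 + 2) s) Mhat,
      (forall l, (1 <= l < l0 + 2)%N -> ~ appears (iterd N L l s) Mhat),
      keq (coefx (iterd N L (l0 + 2) s) Mhat) (kmul ca C)
    & keq (coefx (iterd N L (l0 + 3) s) Mhat)
          (kmul ca (kadd Ct (kopp (kmul Kn C))))].
Proof.
move=> H Hl0 Happ Hnot C Ct Mh s ca Kn.
have Hn := hn H.
have A0 : forall k, (k < l0)%N -> forall K,
    kcoef (coefx (iterd N L k (tS L n)) (U :: M)) K = 0.
  move=> [|k] Hk K.
    rewrite kcoef_coefx /iterd /= cf1 //=.
    apply/negP => /perm_mem /(_ (tS L n)); rewrite !inE eqxx /= => /esym /orP [/eqP E|E].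
    + by case: (hU H) E => m [j [_ _ [->|->]]].
    + by move: (ht H); rewrite /tS E.
  apply/eqP; apply/negPn/negP => Hne.
  by apply: (Hnot k.+1); [lia | exists K].
have hh0 : forall k c K0 K, (k < l0)%N -> hh N L n U M k c K0 K = 0.
  by move=> k c K0 K Hk; rewrite hh_kshift; apply: kshift_zero; apply: A0.
have g0 : forall k, (k <= l0)%N -> forall c K0 K, gg N L n U M k c K0 K = 0.
  elim=> [|k IH] Hk c K0 K.
    by rewrite /gg /= cf1 //; apply/negP => /perm_size.
  by rewrite (g_step H) hh0 ?IH ?addr0 //; lia.
have g1 : forall c K0 K, gg N L n U M l0.+1 c K0 K = hh N L n U M l0 c (K0 ++ [:: Ra n (L n)]) K.
  by move=> c K0 K; rewrite (g_step H) !g0 ?addr0.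
have Sl : forall k K, kcoef (coefx (iterd N L k.+1 s) Mh) K = gg N L n U M k 1 [:: Rc n (L n)] K.
  by move=> k K; rewrite kcoef_coefx (s_step H).
have E3 : keq (coefx (iterd N L (l0 + 2) s) Mh) (kmul ca C).
  move=> K; rewrite addn2 Sl g1 hh_kshift.
  rewrite /ca /C /kmul /= cats0.
  by rewrite /kshift /tS mulr1.
split => //.
- case: Happ => K0 HK0; exists ([:: Rc n (L n); Ra n (L n)] ++ K0).
  rewrite (E3 _) /ca /kmul /= cats0.
  have E := @kcoef_kshift (1 * 1) [:: Rc n (L n); Ra n (L n)] C _ K0 (perm_refl _).
  rewrite /kshift in E; rewrite E mulr1 mul1r; exact: HK0.
- move=> [|l] // Hl [K]; rewrite Sl g0 ?eqxx //; lia.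
- move=> K; rewrite addn3 Sl (g_step H) !g1 !hh_kshift.
  rewrite -[RHS]/(kcoef (kshift (1*1) [:: Rc n (L n); Ra n (L n)]
     (Ct ++ kopp (kshift 1 [:: Rb n (L n)] C ++ (kshift 1 [:: Rc n (L n)] C ++ [::]))) ++ [::]) K).
  rewrite !cats0 !kshift_cat kopp_cat !kshift_cat !kshift_opp !kshift_comp !kcoef_cat addrA.
  have Hsw : forall a b c : rate, perm_eq [:: a; b; c] [:: a; c; b].
    by move=> a b c; rewrite perm_cons (perm_catC [:: b] [:: c]).
  congr (_ + _ + _); apply: kshift_perm => //; rewrite ?mulr1 ?mulN1r ?mulrN1 //.
  - by rewrite /= Hsw.
  - by rewrite /= Hsw.
Qed.

Local Close Scope ring_scope.
Unset Implicit Arguments.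

Theorem mainTheorem18 (N : nat) (L : nat -> nat) (n : nat)
    (U : species) (M : seq species) (l0 : nat) :
  (1 <= N)%N ->
  (forall m, (1 <= m <= N)%N -> (1 <= L m)%N) ->
  (2 <= n <= N)%N ->
  intermediate N L U ->
  (forall X, X \in M ->
     (exists k, (1 <= k <= n - 1)%N /\ in_class N L k X) \/ in_class N L N.*2.+1 X) ->
  (forall X1 X2, X1 \in M -> X2 \in M -> ~ reacts N L X1 X2) ->
  Sp_S (n - 1) (L (n - 1)) \notin M ->
  (1 <= l0)%N ->
  appears (iterd N L l0 (Sp_S (n - 1) (L (n - 1)))) (U :: M) ->
  (forall l, (1 <= l < l0)%N ->
     ~ appears (iterd N L l (Sp_S (n - 1) (L (n - 1)))) (U :: M)) ->
  let C := coefx (iterd N L l0 (Sp_S (n - 1) (L (n - 1)))) (U :: M) in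
  let Ct := coefx (iterd N L l0.+1 (Sp_S (n - 1) (L (n - 1)))) (U :: M) in
  let Mhat := Sp_S n (L n - 1) :: U :: M in
  let s := Sp_S n (L n) in
  let ca := kmul (kvar (Rc n (L n))) (kvar (Ra n (L n))) in
  let Kn := kadd (kvar (Rb n (L n))) (kvar (Rc n (L n))) in
  [/\ appears (iterd N L (l0 + 2) s) Mhat,
      (forall l, (1 <= l < l0 + 2)%N -> ~ appears (iterd N L l s) Mhat),
      keq (coefx (iterd N L (l0 + 2) s) Mhat) (kmul ca C)
    & keq (coefx (iterd N L (l0 + 3) s) Mhat)
          (kmul ca (kadd Ct (kopp (kmul Kn C))))].
Proof.
move=> HN HL Hn HU Hcl HR Ht Hl0 Happ Hnot.
have H : hyps N L n U M.
  split=> //.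
  move=> X /Hcl [[k [Hk Hc]]|Hc].
  - right; have [j ->] := in_class_low HN Hk (proj2 (andP Hn)) Hc; exists k, j; split=> //.
  - by left; apply: in_class_top Hc.
exact: (main_aux H Hl0 Happ Hnot).
Qed.
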